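(* Let $f:E\to X$ be a fibrewise pointed map over $B$. Then $\mathrm{secat}^B_B(f)\le\mathrm{cat}^B_B(X)$. If moreover $E$ is fibrewise pointed contractible, then $\mathrm{secat}^B_B(f)=\mathrm{cat}^B_B(X)$.
   Context: Fibrewise pointed space over $B$: a space $X$ with a map $p_X:X\to B$ and a section $s_X$; fibrewise pointed map: $p_Yf=p_X$, $fs_X=s_Y$. A fibrewise pointed homotopy is a homotopy $H$ with $p_Y(H(x,t))=p_X(x)$ and $H(s_X(b),t)=s_Y(b)$ for all $b,t$ ($\simeq^B_B$). $E$ is fibrewise pointed contractible if it is fibrewise pointed homotopy equivalent to $B$ (with projection and section $\mathrm{id}_B$). $\mathrm{secat}^B_B(f)$: least $n$ such that $X$ is covered by $n+1$ open sets $U\supseteq s_X(B)$ each with a fibrewise pointed map $s:U\to E$ with $fs\simeq^B_B$ the inclusion $U\hookrightarrow X$. $\mathrm{cat}^B_B(X)$: least $n$ such that $X$ is covered by $n+1$ open sets $U_i\supseteq s_X(B)$ with inclusion $U_i\hookrightarrow X$ fibrewise pointed homotopic to $s_X\circ p_X|_{U_i}$. Both $\infty$ if no such $n$. *)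

(* Defs.v *)
From HB Require Import structures.
From mathcomp Require Import all_boot all_order all_algebra.
From mathcomp Require Import all_classical all_reals topology normedtype.
Import numFieldNormedType.Exports.
Set Implicit Arguments. Unset Strict Implicit. Unset Printing Implicit Defensive.
Import Order.TTheory GRing.Theory Num.Theory.
Local Open Scope classical_set_scope.
Local Open Scope ring_scope.

Record fpspace (B : topologicalType) := FPSpace {
  fp_carrier :> topologicalType;
  fp_proj : fp_carrier -> B;
  fp_sec : B -> fp_carrier;
  fp_proj_cont : continuous fp_proj;
  fp_sec_cont : continuous fp_sec;
  fp_proj_sec : forall b, fp_proj (fp_sec b) = b }.
Arguments fp_proj {B} f _.
Arguments fp_sec {B} f _.

Definition fp_base (B : topologicalType) : fpspace B :=
  @FPSpace B B id id (fun x => @cvg_id B (nbhs x)) (fun x => @cvg_id B (nbhs x))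
    (fun b => erefl).

(* f : X -> Y is a fibrewise pointed map on the subspace U of X
   (U is assumed to contain s_X(B)); continuity is for the subspace topology. *)
Definition fp_map_on (B : topologicalType) (X Y : fpspace B)
    (U : set X) (f : X -> Y) : Prop :=
  {within U, continuous f} /\
  (forall x, U x -> fp_proj Y (f x) = fp_proj X x) /\
  (forall b, f (fp_sec X b) = fp_sec Y b).

Definition fp_map (B : topologicalType) (X Y : fpspace B) (f : X -> Y) :=
  fp_map_on setT f.

Definition unitI (R : realType) : set R := `[0%R, 1%R]%classic.

Definition fp_homotopic_on (R : realType) (B : topologicalType)
    (X Y : fpspace B) (U : set X) (g0 g1 : X -> Y) : Prop :=
  exists H : (X * R)%type -> Y,
    {within (U `*` (@unitI R)), continuous H} /\
    (forall x, U x -> H (x, 0%R) = g0 x) /\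
    (forall x, U x -> H (x, 1%R) = g1 x) /\
    (forall x t, U x -> (@unitI R) t -> fp_proj Y (H (x, t)) = fp_proj X x) /\
    (forall b t, (@unitI R) t -> H (fp_sec X b, t) = fp_sec Y b).

Definition fp_contractible (R : realType) (B : topologicalType) (E : fpspace B) :=
  exists (a : E -> fp_base B) (b : fp_base B -> E),
    @fp_map B E (fp_base B) a /\ @fp_map B (fp_base B) E b /\
    @fp_homotopic_on R B (fp_base B) (fp_base B) setT (a \o b) id /\
    @fp_homotopic_on R B E E setT (b \o a) id.

Definition secat_le (R : realType) (B : topologicalType) (E X : fpspace B)
    (f : E -> X) (n : nat) : Prop :=
  exists U : 'I_n.+1 -> set X,
    (forall i, open (U i)) /\
    (forall i, range (fp_sec X) `<=` U i) /\
    (forall x, exists i, U i x) /\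
    (forall i, exists s : X -> E,
        fp_map_on (U i) s /\ @fp_homotopic_on R B X X (U i) (f \o s) id).

Definition cat_le (R : realType) (B : topologicalType) (X : fpspace B)
    (n : nat) : Prop :=
  exists U : 'I_n.+1 -> set X,
    (forall i, open (U i)) /\
    (forall i, range (fp_sec X) `<=` U i) /\
    (forall x, exists i, U i x) /\
    (forall i, @fp_homotopic_on R B X X (U i) id (fp_sec X \o fp_proj X)).

(* Least n satisfying P, or None (= infinity) if there is none. *)
Definition least_nat (P : nat -> Prop) : option nat :=
  match pselect (exists n, P n) with
  | left ex => Some (ex_minn (P := fun n => `[< P n >])
                      (let: ex_intro n Pn := ex in ex_intro _ n (asboolT Pn)))
  | right _ => None
  end.

Definition ole (a b : option nat) : bool :=
  match a, b with
  | _, None => true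
  | None, Some _ => false
  | Some m, Some n => (m <= n)%N
  end.

Definition secatBB (R : realType) (B : topologicalType) (E X : fpspace B)
    (f : E -> X) : option nat := least_nat (secat_le R f).

Definition catBB (R : realType) (B : topologicalType) (X : fpspace B) : option nat :=
  least_nat (cat_le R X).

(* Main.v *)
Require Import Defs.
From HB Require Import structures.
From mathcomp Require Import all_boot all_order all_algebra.
From mathcomp Require Import all_classical all_reals topology normedtype.
From mathcomp Require Import lra.
Import numFieldNormedType.Exports.
Set Implicit Arguments. Unset Strict Implicit. Unset Printing Implicit Defensive.
Import Order.TTheory GRing.Theory Num.Theory.
Local Open Scope classical_set_scope.
Local Open Scope ring_scope.
Definition wc {T U : topologicalType} (S : set T) (f : T -> U) :=
  forall x, S x -> f @ within S (nbhs x) --> f x.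

Lemma wc_comp {T T' U : topologicalType} (S' : set T') (S : set T)
  (g : T' -> T) (f : T -> U) :
  wc S' g -> (forall x, S' x -> S (g x)) -> wc S f -> wc S' (f \o g).
Proof.
move=> wg gS wf x S'x.
apply: (cvg_comp g f _ (wf _ (gS _ S'x))).
move=> P /=; rewrite {1}/within /=. 
move=> hP; have := wg x S'x _ hP => /= h.
have W : within S' (nbhs x) S' by apply: withinT.
change (within S' (nbhs x) (g @^-1` (fun t => S t -> P t))) in h.
change (within S' (nbhs x) (g @^-1` P)).
have hI := @filterI _ _ (within_filter _ _) _ _ h W.
apply: (@filterS _ _ (within_filter _ _) _ _ _ (hI _)) => y [h1 h2].
exact: h1 (gS _ h2).
Qed.

Lemma wcT {T U : topologicalType} (S : set T) (f : T -> U) :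
  continuous f -> wc S f.
Proof. by move=> cf x _; apply: cvg_within_filter (cf x). Qed.

Lemma wc_eq {T U : topologicalType} (S : set T) (f g : T -> U) :
  wc S f -> (forall x, S x -> f x = g x) -> wc S g.
Proof.
move=> wf e x Sx; rewrite -(e x Sx).
apply: (cvg_trans _ (wf x Sx)); apply: fmap_within_eq => y /set_mem Sy.
by rewrite e.
Qed.



Lemma wc_sub' {T U : topologicalType} (S S' : set T) (f : T -> U) :
  S' `<=` S -> wc S f -> wc S' f.
Proof.
move=> sub wf x S'x.
apply: (cvg_trans _ (wf x (sub _ S'x))).
by apply: cvg_app; apply: within_subset.
Qed.

Lemma wc_glue {T U : topologicalType} (S A B : set T) (f : T -> U) :
  closed A -> closed B -> S `<=` A `|` B ->
  wc (S `&` A) f -> wc (S `&` B) f -> wc S f.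
Proof.
move=> cA cB sAB wA wB x Sx W /= hW.
have hA : nbhs x (fun y => (S `&` A) y -> W (f y)).
  have [Ax|nAx] := pselect (A x).
    exact: (wA x (conj Sx Ax) W hW).
  have : nbhs x (~` A) by apply: open_nbhs_nbhs; split => //; rewrite openC.
  by apply: filterS => y nAy [_ Ay].
have hB : nbhs x (fun y => (S `&` B) y -> W (f y)).
  have [Bx|nBx] := pselect (B x).
    exact: (wB x (conj Sx Bx) W hW).
  have : nbhs x (~` B) by apply: open_nbhs_nbhs; split => //; rewrite openC.
  by apply: filterS => y nBy [_ By].
change (nbhs x (fun y => S y -> W (f y))).
apply: (filterS _ (filterI hA hB)) => y [h1 h2] Sy.
by case: (sAB _ Sy) => [Ay|By]; [apply: h1|apply: h2].
Qed.
Lemma wc_pair {T U V : topologicalType} (S : set T) (a : T -> U) (b : T -> V) :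
  wc S a -> wc S b -> wc S (fun p => (a p, b p)).
Proof. by move=> wa wb x Sx; apply: cvg_pair; [apply: wa|apply: wb]. Qed.

Lemma cont_fst {T U : topologicalType} : continuous (@fst T U).
Proof. by move=> [x y]; apply: cvg_fst. Qed.

Lemma cont_snd {T U : topologicalType} : continuous (@snd T U).
Proof. by move=> [x y]; apply: cvg_snd. Qed.

Lemma cont_aff {R : realType} (c k : R) : continuous (fun t : R => c - k * t).
Proof.
move=> t; apply: continuousB; first exact: cst_continuous.
apply: continuousM; first exact: cst_continuous.
exact: cvg_id.
Qed.

Lemma cont_pair {T U V : topologicalType} (a : T -> U) (b : T -> V) :
  continuous a -> continuous b -> continuous (fun p => (a p, b p)).
Proof. by move=> wa wb x; apply: cvg_pair; [apply: wa|apply: wb]. Qed.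

Lemma cont_snd_aff {T : topologicalType} {R : realType} (c k : R) :
  continuous (fun p : T * R => c - k * p.2).
Proof.
move=> q.
have h1 : {for q, continuous (@snd T R)} by apply: cont_snd.
have h2 : {for q.2, continuous (fun t : R => c - k * t)} by apply: cont_aff.
exact: (continuous_comp h1 h2).
Qed.
Lemma wcE {T U : topologicalType} (S : set T) (f : T -> U) :
  {within S, continuous f} <-> wc S f.
Proof. exact: subspace_continuousP. Qed.
Lemma unitI_E (R : realType) (t : R) : unitI t <-> (0 <= t /\ t <= 1).
Proof.
rewrite /unitI /= in_itv /=; split; first by move/andP.
by case=> -> ->.
Qed.

Lemma cat_to_secat (R : realType) (B : topologicalType) (E X : fpspace B)
    (f : E -> X) (hf : fp_map f) n :
  cat_le R X n -> secat_le R f n.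
Proof.
case: hf => _ [_ hf3].
move=> [U [oU [secU [cov hom]]]]; exists U; do 3 split => //.
move=> i; exists (fp_sec E \o fp_proj X); split.
  split.
    apply: continuous_subspaceT => x; apply: continuous_comp.
      exact: fp_proj_cont. exact: fp_sec_cont.
  by split => [x _|b] /=; rewrite fp_proj_sec.
have [H [Hc [H0 [H1 [Hp Hs]]]]] := hom i.
exists (fun p => H (p.1, 1 - p.2)); split.
  apply/wcE.
  have -> : (fun p : X * R => H (p.1, 1 - p.2)) =
     H \o (fun p : X * R => (p.1, 1 - 1 * p.2)).
    by apply: funext => p /=; rewrite mul1r.
  apply: (wc_comp (S := U i `*` @unitI R)).
  - apply: wcT; apply: cont_pair; first exact: cont_fst.
    exact: cont_snd_aff.
  - move=> [x t] [/= Ux /unitI_E It]; split => //; apply/unitI_E; lra.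
  - exact/wcE.
split; first by move=> x Ux /=; rewrite subr0 H1.
split; first by move=> x Ux /=; rewrite subrr H0.
split.
  move=> x t Ux /unitI_E It /=; apply: Hp => //; apply/unitI_E; lra.
move=> b t /unitI_E It /=; apply: Hs; apply/unitI_E; lra.
Qed.
Lemma secat_to_cat (R : realType) (B : topologicalType) (E X : fpspace B)
    (f : E -> X) (hf : fp_map f) (hc : fp_contractible R E) n :
  secat_le R f n -> cat_le R X n.
Proof.
case: hf => hf1 [hf2 hf3].
have fc : continuous f by apply/continuous_subspace_setT.
case: hc => a [b [[_ [ha2 _]] [[_ [_ hb3]] [_ [K [Kc [K0 [K1 [Kp Ks]]]]]]]]].
have aE : forall e, a e = fp_proj E e by move=> e; exact: (ha2 e I).
have bE : forall y, b y = fp_sec E y by move=> y; exact: (hb3 y).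
move=> [U [oU [secU [cov hom]]]]; exists U; do 3 split => //.
move=> i; have [s [[sc [sp ss]] [H [Hc [H0 [H1 [Hp Hs]]]]]]] := hom i.
pose L := fun p : X * R => if p.2 <= 2^-1 then H (p.1, 1 - 2 * p.2)
                           else f (K (s p.1, 2 - 2 * p.2)).
exists L; split.
  apply/wcE.
  apply: (wc_glue (A := [set p : X * R | p.2 <= 2^-1])
                  (B := [set p : X * R | 2^-1 <= p.2])).
  - exact: (proj1 (continuous_closedP _) cont_snd _ (@closed_le R 2^-1)).
  - exact: (proj1 (continuous_closedP _) cont_snd _ (@closed_ge R 2^-1)).
  - move=> [x t] _ /=; have [h|h] := lerP t 2^-1; [left|right] => //.
    exact: ltW.
  - apply: (wc_eq (f := H \o (fun p : X * R => (p.1, 1 - 2 * p.2)))).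
      apply: (wc_comp (S := U i `*` @unitI R)).
      + apply: wcT; apply: cont_pair; first exact: cont_fst.
        exact: cont_snd_aff.
      + move=> [x t] [[/= Ux /unitI_E It] /= ht]; split => //; apply/unitI_E.
        lra.
      + exact/wcE.
    by move=> [x t] [_ /= ht]; rewrite /L /= ht.
  - apply: (wc_eq (f := f \o (K \o (fun p : X * R => (s p.1, 2 - 2 * p.2))))).
      apply: (wc_comp (S := setT)); last 2 first.
      + by [].
      + exact: wcT.
      apply: (wc_comp (S := setT `*` @unitI R)); last 2 first.
      + move=> [x t] [[/= Ux /unitI_E It] /= ht]; split => //; apply/unitI_E.
        lra.
      + exact/wcE.
      apply: wc_pair.
        apply: (wc_comp (S := U i)); last exact/wcE.
          by apply: wcT; apply: cont_fst.
        by move=> [x t] [[]].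
      by apply: wcT; apply: cont_snd_aff.
    move=> [x t] [[/= Ux /unitI_E It] /= ht].
    rewrite /L /=; case: ifPn => // ht'.
    have -> : t = 2^-1 by apply/eqP; rewrite eq_le ht' ht.
    have -> : 1 - 2 * 2^-1 = 0 :> R by lra.
    have -> : 2 - 2 * 2^-1 = 1 :> R by lra.
    by rewrite H0 // K1.
split.
  move=> x Ux; rewrite /L /= ifT; last lra.
  by rewrite mulr0 subr0 H1.
split.
  move=> x Ux; rewrite /L /= ifF; last lra.
  by rewrite mulr1 subrr K0 // /= bE aE (sp x Ux) hf3.
split.
  move=> x t Ux /unitI_E It; rewrite /L /=; case: ifPn => ht.
    by apply: Hp => //; apply/unitI_E; lra.
  rewrite hf2 // Kp ?(sp x Ux) //; apply/unitI_E; move: ht; rewrite -ltNge; lra.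
move=> y t /unitI_E It; rewrite /L /=; case: ifPn => ht.
  by apply: Hs; apply/unitI_E; lra.
rewrite ss Ks ?hf3 //; apply/unitI_E; move: ht; rewrite -ltNge; lra.
Qed.
Lemma least_nat_le (P Q : nat -> Prop) :
  (forall n, Q n -> P n) -> ole (least_nat P) (least_nat Q).
Proof.
move=> QP; rewrite /least_nat.
case: (pselect (exists n, Q n)) => [[m Qm]|nQ]; last by case: pselect.
case: (pselect (exists n, P n)) => [exP|nP]; last by exfalso; apply: nP; exists m; exact: QP.
rewrite /ole.
case: ex_minnP => k Pk mink.
case: ex_minnP => j /asboolP Qj _.
by apply: mink; apply/asboolP; apply: QP.
Qed.

Theorem proposition3p6 (R : realType) (B : topologicalType) (E X : fpspace B)
    (f : E -> X) (hf : fp_map f) :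
  ole (secatBB R f) (catBB R X) /\
  (fp_contractible R E -> secatBB R f = catBB R X).
Proof.
split; first by apply: least_nat_le => n; apply: cat_to_secat.
move=> hc; rewrite /secatBB /catBB.
have -> : secat_le R f = cat_le R X.
  apply: funext => n; apply: propext; split.
    exact: secat_to_cat.
  exact: cat_to_secat.
by [].
Qed.
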